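(* Let $n=2$, assume Assumptions A and B, $c_1^2+c_2^2>0$, and that the solution $S$ of (IVP) exists on $[r_0,\infty)$ with limit $s_\infty=\lim_{r\to\infty}S(r)$. If $s_\infty\notin\{0,1\}$, then $c_1c_2>0$ and $s_\infty=s^*$.
   Context: For $i=1,2$, $g_i(s)=a^{(i)}_0+a^{(i)}_1s^{\alpha^{(i)}_1}+\dots+a^{(i)}_{N_i}s^{\alpha^{(i)}_{N_i}}$ ($s\ge0$) with $N_i\ge0$, $a^{(i)}_0>0$, $a^{(i)}_j\ge0$, real $0<\alpha^{(i)}_1<\dots<\alpha^{(i)}_{N_i}$; $G_i(u)=g_i(|u|)u$ for $u\in\mathbb R$. Assumption A: $f_1,f_2\in C([0,1])\cap C^1((0,1))$, $f_1(0)=0$, $f_2(1)=0$, $f_1'>0$, $f_2'<0$ on $(0,1)$. Assumption B: $p_c'\in C^1((0,1))$, $p_c'>0$ on $(0,1)$. $F_i(S)=1/(p_c'(S)f_i(S))$. (IVP) with dimension $n$: $S'(r)=G_2(c_2r^{1-n})F_2(S)-G_1(c_1r^{1-n})F_1(S)$ for $r>r_0$, $S(r_0)=s_0\in(0,1)$, $0<S<1$. The function $f=f_1/f_2$ is a strictly increasing bijection of $(0,1)$ onto $(0,\infty)$; when $c_1c_2>0$ define $s^*=f^{-1}\big(c_1a^{(1)}_0/(c_2a^{(2)}_0)\big)\in(0,1)$. *)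

(* Defs.v *)
From Stdlib Require Import Reals Lra.
Open Scope R_scope.

Definition pw (s alpha : R) : R :=
  if Rlt_dec 0 s then Rpower s alpha else 0.

Fixpoint gsum (a al : nat -> R) (N : nat) (s : R) : R :=
  match N with
  | O => 0
  | S k => gsum a al k s + a (S k) * pw s (al (S k))
  end.

Definition gfun (a al : nat -> R) (N : nat) (s : R) : R := a O + gsum a al N s.

Definition Gfun (a al : nat -> R) (N : nat) (u : R) : R := gfun a al N (Rabs u) * u.

Definition g_coeffs_ok (a al : nat -> R) (N : nat) : Prop :=
  0 < a O /\
  (forall j, (1 <= j <= N)%nat -> 0 <= a j) /\
  (forall j, (1 <= j <= N)%nat -> 0 < al j) /\
  (forall j, (1 <= j < N)%nat -> al j < al (S j)).

Definition Ffun (dpc fi : R -> R) (s : R) : R := 1 / (dpc s * fi s).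

Definition cont_on_01 (f : R -> R) : Prop :=
  forall x, 0 <= x <= 1 -> limit1_in f (fun y => 0 <= y <= 1) (f x) x.

Definition C1_on_01 (f df : R -> R) : Prop :=
  forall x, 0 < x < 1 -> derivable_pt_lim f x (df x) /\ continuity_pt df x.

Definition lim_infty (S : R -> R) (l : R) : Prop :=
  forall eps, eps > 0 -> exists M, forall r, r >= M -> Rabs (S r - l) < eps.

(* s is s^* = f^{-1}(c1 a0^(1)/(c2 a0^(2))), f = f1/f2 : (0,1) -> (0,oo) *)
Definition is_sstar (f1 f2 : R -> R) (c1 c2 a10 a20 s : R) : Prop :=
  0 < s < 1 /\ f1 s / f2 s = (c1 * a10) / (c2 * a20).

(* Main.v *)
Require Import Defs.
From Stdlib Require Import Reals Lra Lia.
From Coquelicot Require Import Coquelicot.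
Open Scope R_scope.

Lemma pw_small al : 0 < al -> forall eps, 0 < eps ->
  exists d, 0 < d /\ forall s, 0 <= s < d -> Rabs (pw s al) < eps.
Proof.
  intros Hal eps He. exists (exp (ln eps / al)). split; [apply exp_pos|].
  intros s [Hs0 Hsd]. unfold pw. destruct (Rlt_dec 0 s) as [Hp|Hn].
  - unfold Rpower. rewrite Rabs_pos_eq by (left; apply exp_pos).
    rewrite <- (exp_ln eps He). apply exp_increasing.
    assert (ln s < ln eps / al).
    { rewrite <- (ln_exp (ln eps / al)). apply ln_increasing; auto. }
    apply (Rmult_lt_compat_l al) in H; auto.
    replace (al * (ln eps / al)) with (ln eps) in H by (field; lra). lra.
  - rewrite Rabs_R0. auto.
Qed.

Lemma gsum_small a al N : (forall j, (1 <= j <= N)%nat -> 0 < al j) ->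
  forall eps, 0 < eps ->
  exists d, 0 < d /\ forall s, 0 <= s < d -> Rabs (gsum a al N s) < eps.
Proof.
  induction N as [|k IH]; intros Hal eps He.
  - exists 1. split; [lra|]. intros s _. simpl. rewrite Rabs_R0. auto.
  - destruct (IH (fun j Hj => Hal j ltac:(lia)) (eps/2) ltac:(lra)) as [d1 [Hd1 H1]].
    set (e2 := eps / (2 * (Rabs (a (S k)) + 1))).
    assert (He2 : 0 < e2).
    { unfold e2. apply Rdiv_lt_0_compat; [lra|]. pose proof (Rabs_pos (a (S k))). lra. }
    destruct (pw_small (al (S k)) (Hal (S k) ltac:(lia)) e2 He2) as [d2 [Hd2 H2]].
    exists (Rmin d1 d2). split; [apply Rmin_pos; auto|].
    intros s [Hs0 Hsd]. simpl.
    assert (Hs1 : s < d1) by (eapply Rlt_le_trans; [exact Hsd| apply Rmin_l]).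
    assert (Hs2 : s < d2) by (eapply Rlt_le_trans; [exact Hsd| apply Rmin_r]).
    specialize (H1 s ltac:(lra)). specialize (H2 s ltac:(lra)).
    eapply Rle_lt_trans; [apply Rabs_triang|]. rewrite Rabs_mult.
    pose proof (Rabs_pos (a (S k))). pose proof (Rabs_pos (pw s (al (S k)))).
    assert (Rabs (a (S k)) * Rabs (pw s (al (S k))) <= Rabs (a (S k)) * e2)
      by (apply Rmult_le_compat_l; lra).
    assert (Rabs (a (S k)) * e2 <= eps / 2).
    { unfold e2. apply (Rmult_le_reg_r (2 * (Rabs (a (S k)) + 1))); [lra|].
      field_simplify; [|lra]. nra. }
    lra.
Qed.

Lemma lim_from_eps f (l : R) :
  (forall eps, 0 < eps -> exists M, forall r, r > M -> Rabs (f r - l) < eps) ->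
  is_lim f p_infty l.
Proof.
  intros H. apply is_lim_spec. intros eps. destruct (H eps (cond_pos eps)) as [M HM].
  exists M. intros x Hx. apply HM. lra.
Qed.

Lemma eps_from_lim f (l : R) : is_lim f p_infty l ->
  forall eps, 0 < eps -> exists M, forall r, r > M -> Rabs (f r - l) < eps.
Proof.
  intros H eps He. apply is_lim_spec in H. unfold is_lim' in H. destruct (H (mkposreal eps He)) as [M HM].
  exists M. intros r Hr. apply HM. lra.
Qed.

Lemma lim_gfun a al N c : (forall j, (1 <= j <= N)%nat -> 0 < al j) ->
  is_lim (fun r => gfun a al N (Rabs (c * / r)) * c) p_infty (a O * c).
Proof.
  intros Hal. apply lim_from_eps. intros eps He.
  pose proof (Rabs_pos c).
  destruct (gsum_small a al N Hal (eps / (Rabs c + 1))) as [d [Hd Hg]].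
  { apply Rdiv_lt_0_compat; lra. }
  exists (Rabs c / d + 1). intros r Hr.
  assert (0 <= Rabs c / d) by (apply Rdiv_le_0_compat; lra).
  assert (Hr0 : 0 < r) by lra.
  assert (Habs : Rabs (c * / r) < d).
  { rewrite Rabs_mult, Rabs_inv, (Rabs_pos_eq r) by lra.
    apply (Rmult_lt_reg_r r); [lra|]. field_simplify; [|lra].
    assert (Rabs c / d < r) by lra.
    apply (Rmult_lt_compat_r d) in H1; auto. field_simplify in H1; lra. }
  specialize (Hg _ (conj (Rabs_pos _) Habs)).
  unfold gfun. replace ((a 0%nat + gsum a al N (Rabs (c * / r))) * c - a 0%nat * c)
    with (gsum a al N (Rabs (c * / r)) * c) by ring.
  rewrite Rabs_mult.
  assert (Rabs (gsum a al N (Rabs (c * / r))) * Rabs c <= eps / (Rabs c + 1) * Rabs c)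
    by (apply Rmult_le_compat_r; lra).
  assert (eps / (Rabs c + 1) * Rabs c < eps).
  { apply (Rmult_lt_reg_r (Rabs c + 1)); [lra|]. field_simplify; lra. }
  lra.
Qed.

Lemma incr01 f df : (forall x, 0 < x < 1 -> derivable_pt_lim f x (df x)) ->
  (forall x, 0 < x < 1 -> df x > 0) -> forall y z, 0 < y -> y < z -> z < 1 -> f y < f z.
Proof.
  intros Hd Hp y z Hy Hyz Hz.
  destruct (MVT_gen f y z df) as [c [Hc Heq]].
  - intros x Hx. rewrite Rmin_left, Rmax_right in Hx by lra.
    apply is_derive_Reals. apply Hd. lra.
  - intros x Hx. rewrite Rmin_left, Rmax_right in Hx by lra.
    apply derivable_continuous_pt. exists (df x). apply Hd. lra.
  - rewrite Rmin_left, Rmax_right in Hc by lra.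
    assert (df c > 0) by (apply Hp; lra).
    assert (0 < df c * (z - y)) by (apply Rmult_lt_0_compat; lra). lra.
Qed.

Lemma pos_at0 f : cont_on_01 f -> f 0 = 0 ->
  (forall y z, 0 < y -> y < z -> z < 1 -> f y < f z) -> forall s, 0 < s < 1 -> f s > 0.
Proof.
  intros Hc H0 Hi s Hs. destruct (Rlt_le_dec 0 (f s)) as [|Hle]; [lra|].
  exfalso. set (m := s / 2).
  assert (Hm : f m < f s) by (apply Hi; unfold m; lra).
  specialize (Hc 0 ltac:(lra)). unfold limit1_in, limit_in in Hc. simpl in Hc.
  destruct (Hc (- f m) ltac:(lra)) as [alp [Halp Hx]].
  set (x := Rmin (alp / 2) (m / 2)).
  assert (Hx1 : x <= alp / 2) by apply Rmin_l.
  assert (Hx2 : x <= m / 2) by apply Rmin_r.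
  assert (Hx0 : 0 < x) by (apply Rmin_pos; unfold m; lra).
  specialize (Hx x). unfold R_dist in Hx. rewrite H0 in Hx.
  assert (f x < f m) by (apply Hi; unfold m in *; lra).
  assert (Rabs (f x - 0) < - f m).
  { apply Hx. split; [unfold m in *; lra|]. rewrite Rminus_0_r, Rabs_pos_eq; lra. }
  rewrite Rminus_0_r, Rabs_left in H1 by lra. lra.
Qed.

Lemma pos_at1 f : cont_on_01 f -> f 1 = 0 ->
  (forall y z, 0 < y -> y < z -> z < 1 -> f z < f y) -> forall s, 0 < s < 1 -> f s > 0.
Proof.
  intros Hc H0 Hi s Hs. destruct (Rlt_le_dec 0 (f s)) as [|Hle]; [lra|].
  exfalso. set (m := (s + 1) / 2).
  assert (Hm : f m < f s) by (apply Hi; unfold m; lra).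
  specialize (Hc 1 ltac:(lra)). unfold limit1_in, limit_in in Hc. simpl in Hc.
  destruct (Hc (- f m) ltac:(lra)) as [alp [Halp Hx]].
  set (x := 1 - Rmin (alp / 2) ((1 - m) / 2)).
  assert (Hx1 : Rmin (alp / 2) ((1 - m) / 2) <= alp / 2) by apply Rmin_l.
  assert (Hx2 : Rmin (alp / 2) ((1 - m) / 2) <= (1 - m) / 2) by apply Rmin_r.
  assert (Hx0 : 0 < Rmin (alp / 2) ((1 - m) / 2)) by (apply Rmin_pos; unfold m; lra).
  specialize (Hx x). unfold R_dist in Hx. rewrite H0 in Hx.
  assert (f x < f m) by (apply Hi; unfold x, m in *; lra).
  assert (Rabs (f x - 0) < - f m).
  { apply Hx. split; [unfold x, m in *; lra|]. unfold x.
    rewrite Rabs_left1; lra. }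
  rewrite Rminus_0_r, Rabs_left in H1 by lra. lra.
Qed.

Lemma Fcont dpc ddpc f df s : C1_on_01 dpc ddpc -> C1_on_01 f df -> 0 < s < 1 ->
  dpc s > 0 -> f s > 0 -> continuity_pt (Ffun dpc f) s.
Proof.
  intros Hd Hf Hs Hp Hq.
  assert (C1 : continuity_pt dpc s).
  { apply derivable_continuous_pt. exists (ddpc s). apply (Hd s Hs). }
  assert (C2 : continuity_pt f s).
  { apply derivable_continuous_pt. exists (df s). apply (Hf s Hs). }
  assert (H := continuity_pt_div (fct_cte 1) (mult_fct dpc f) s
    (continuity_pt_const (fct_cte 1) s (fun _ _ => eq_refl)) (continuity_pt_mult _ _ s C1 C2)
    ltac:(unfold mult_fct; apply Rgt_not_eq; apply Rmult_gt_0_compat; auto)).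
  exact H.
Qed.

Theorem lemma2p4
  (N1 N2 : nat) (a1 al1 a2 al2 : nat -> R)
  (f1 f2 df1 df2 pc dpc ddpc : R -> R)
  (c1 c2 r0 s0 sinf : R) (Ssol : R -> R)
  (* coefficients of g_1, g_2 *)
  (hg1 : g_coeffs_ok a1 al1 N1) (hg2 : g_coeffs_ok a2 al2 N2)
  (* Assumption A *)
  (hf1c : cont_on_01 f1) (hf2c : cont_on_01 f2)
  (hf1d : C1_on_01 f1 df1) (hf2d : C1_on_01 f2 df2)
  (hf10 : f1 0 = 0) (hf21 : f2 1 = 0)
  (hdf1 : forall x, 0 < x < 1 -> df1 x > 0)
  (hdf2 : forall x, 0 < x < 1 -> df2 x < 0)
  (* Assumption B *)
  (hpc : forall x, 0 < x < 1 -> derivable_pt_lim pc x (dpc x))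
  (hdpc : C1_on_01 dpc ddpc)
  (hdpcpos : forall x, 0 < x < 1 -> dpc x > 0)
  (* c_1^2 + c_2^2 > 0 *)
  (hc : c1 ^ 2 + c2 ^ 2 > 0)
  (* the solution of (IVP) with n = 2 exists on [r0, oo) *)
  (hr0 : 0 < r0) (hs0 : 0 < s0 < 1)
  (hSr0 : Ssol r0 = s0)
  (hScont : limit1_in Ssol (fun r => r0 <= r) s0 r0)
  (hSrange : forall r, r >= r0 -> 0 < Ssol r < 1)
  (hSode : forall r, r > r0 ->
     derivable_pt_lim Ssol r
       (Gfun a2 al2 N2 (c2 * / r) * Ffun dpc f2 (Ssol r)
        - Gfun a1 al1 N1 (c1 * / r) * Ffun dpc f1 (Ssol r)))
  (* limit at infinity *)
  (hlim : lim_infty Ssol sinf)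
  (hsinf : sinf <> 0 /\ sinf <> 1) :
  c1 * c2 > 0 /\ is_sstar f1 f2 c1 c2 (a1 O) (a2 O) sinf.
Proof.
  assert (Hs01 : 0 < sinf < 1).
  { assert (0 <= sinf).
    { destruct (Rle_dec 0 sinf) as [|Hn]; auto. exfalso.
      destruct (hlim (- sinf) ltac:(lra)) as [M HM].
      specialize (HM (Rmax M r0) (Rle_ge _ _ (Rmax_l _ _))).
      specialize (hSrange (Rmax M r0) (Rle_ge _ _ (Rmax_r _ _))).
      apply Rabs_def2 in HM. lra. }
    assert (sinf <= 1).
    { destruct (Rle_dec sinf 1) as [|Hn]; auto. exfalso.
      destruct (hlim (sinf - 1) ltac:(lra)) as [M HM].
      specialize (HM (Rmax M r0) (Rle_ge _ _ (Rmax_l _ _))).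
      specialize (hSrange (Rmax M r0) (Rle_ge _ _ (Rmax_r _ _))).
      apply Rabs_def2 in HM. lra. }
    destruct hsinf. split; lra. }
  assert (Hinc1 : forall y z, 0 < y -> y < z -> z < 1 -> f1 y < f1 z).
  { apply (incr01 f1 df1); [intros; apply hf1d; auto | auto]. }
  assert (Hdec2 : forall y z, 0 < y -> y < z -> z < 1 -> f2 z < f2 y).
  { intros y z Hy Hyz Hz.
    assert (- f2 y < - f2 z); [|lra].
    apply (incr01 (fun x => - f2 x) (fun x => - df2 x)); auto.
    - intros x Hx. apply derivable_pt_lim_opp. apply hf2d; auto.
    - intros x Hx. specialize (hdf2 x Hx). lra. }
  assert (Hp := pos_at0 f1 hf1c hf10 Hinc1 sinf Hs01).
  assert (Hq := pos_at1 f2 hf2c hf21 Hdec2 sinf Hs01).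
  assert (Hu := hdpcpos sinf Hs01).
  assert (HS : is_lim Ssol p_infty sinf).
  { apply lim_from_eps. intros eps He. destruct (hlim eps He) as [M HM].
    exists M. intros r Hr. apply HM. lra. }
  assert (HF1 : is_lim (fun r => Ffun dpc f1 (Ssol r)) p_infty (Ffun dpc f1 sinf)).
  { unfold is_lim. eapply filterlim_comp; [exact HS|].
    apply continuity_pt_filterlim. eapply Fcont; eauto. }
  assert (HF2 : is_lim (fun r => Ffun dpc f2 (Ssol r)) p_infty (Ffun dpc f2 sinf)).
  { unfold is_lim. eapply filterlim_comp; [exact HS|].
    apply continuity_pt_filterlim. eapply Fcont; eauto. }
  destruct hg1 as [ha10 [_ [hal1 _]]]. destruct hg2 as [ha20 [_ [hal2 _]]].
  set (K := fun r => gfun a2 al2 N2 (Rabs (c2 * / r)) * c2 * Ffun dpc f2 (Ssol r)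
                   - gfun a1 al1 N1 (Rabs (c1 * / r)) * c1 * Ffun dpc f1 (Ssol r)).
  set (L := a2 O * c2 * Ffun dpc f2 sinf - a1 O * c1 * Ffun dpc f1 sinf).
  assert (HK : is_lim K p_infty L).
  { assert (H2 : is_lim (fun r => gfun a2 al2 N2 (Rabs (c2 * / r)) * c2 * Ffun dpc f2 (Ssol r))
       p_infty (Rbar_mult (a2 O * c2) (Ffun dpc f2 sinf))).
    { apply is_lim_mult; [apply lim_gfun; auto | exact HF2 | simpl; exact I]. }
    assert (H1 : is_lim (fun r => gfun a1 al1 N1 (Rabs (c1 * / r)) * c1 * Ffun dpc f1 (Ssol r))
       p_infty (Rbar_mult (a1 O * c1) (Ffun dpc f1 sinf))).
    { apply is_lim_mult; [apply lim_gfun; auto | exact HF1 | simpl; exact I]. }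
    simpl in H1, H2. unfold K, L. apply is_lim_minus'; auto. }
  assert (HKder : forall r, r > r0 -> derivable_pt_lim Ssol r (K r / r)).
  { intros r Hr. replace (K r / r) with
      (Gfun a2 al2 N2 (c2 * / r) * Ffun dpc f2 (Ssol r)
        - Gfun a1 al1 N1 (c1 * / r) * Ffun dpc f1 (Ssol r)).
    - apply hSode; auto.
    - unfold K, Gfun. field. lra. }
  assert (HL : L = 0).
  { destruct (Req_dec L 0) as [|HL]; auto. exfalso.
    assert (HaL : 0 < Rabs L) by (apply Rabs_pos_lt; auto).
    destruct (eps_from_lim K L HK (Rabs L / 2) ltac:(lra)) as [M1 HM1].
    destruct (hlim (Rabs L / 8) ltac:(lra)) as [M2 HM2].
    set (x := Rmax (Rmax M1 M2) r0 + 1).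
    assert (x > M1) by (unfold x; pose proof (Rmax_l (Rmax M1 M2) r0); pose proof (Rmax_l M1 M2); lra).
    assert (x > M2) by (unfold x; pose proof (Rmax_l (Rmax M1 M2) r0); pose proof (Rmax_r M1 M2); lra).
    assert (x > r0) by (unfold x; pose proof (Rmax_r (Rmax M1 M2) r0); lra).
    destruct (MVT_gen Ssol x (2 * x) (fun r => K r / r)) as [c [Hc Heq]].
    - intros y Hy. rewrite Rmin_left, Rmax_right in Hy by lra.
      apply is_derive_Reals. apply HKder. lra.
    - intros y Hy. rewrite Rmin_left, Rmax_right in Hy by lra.
      apply derivable_continuous_pt. exists (K y / y). apply HKder. lra.
    - rewrite Rmin_left, Rmax_right in Hc by lra.
      assert (G1 := HM2 x ltac:(lra)). assert (G2 := HM2 (2 * x) ltac:(lra)).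
      assert (G3 := HM1 c ltac:(lra)).
      assert (Hd : Rabs (Ssol (2 * x) - Ssol x) < Rabs L / 4).
      { replace (Ssol (2 * x) - Ssol x) with ((Ssol (2 * x) - sinf) - (Ssol x - sinf)) by ring.
        eapply Rle_lt_trans; [apply Rabs_triang|]. rewrite Rabs_Ropp. lra. }
      rewrite Heq in Hd. replace (2 * x - x) with x in Hd by ring.
      assert (Hkc : Rabs L / 2 < Rabs (K c)).
      { pose proof (Rabs_triang_inv L (K c)) as G4.
        replace (L - K c) with (- (K c - L)) in G4 by ring. rewrite Rabs_Ropp in G4. lra. }
      cbv beta in Hd. unfold Rdiv in Hd. rewrite Rabs_mult, Rabs_mult, Rabs_inv, (Rabs_pos_eq c), (Rabs_pos_eq x) in Hd by lra.
      assert (Rabs (K c) * / c * x >= Rabs (K c) / 2); [|lra].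
      apply Rle_ge. apply (Rmult_le_reg_r (2 * c)); [lra|].
      field_simplify; [|lra]. pose proof (Rabs_pos (K c)). nra. }
  unfold L, Ffun in HL.
  assert (Heq : c2 * a2 O * f1 sinf = c1 * a1 O * f2 sinf).
  { assert (dpc sinf * f2 sinf <> 0) by (apply Rgt_not_eq; apply Rmult_gt_0_compat; lra).
    assert (dpc sinf * f1 sinf <> 0) by (apply Rgt_not_eq; apply Rmult_gt_0_compat; lra).
    apply (Rmult_eq_reg_r (/ (dpc sinf * f1 sinf * f2 sinf))).
    2: { apply Rinv_neq_0_compat. apply Rgt_not_eq. apply Rmult_gt_0_compat; [|lra].
         apply Rmult_gt_0_compat; lra. }
    replace (c2 * a2 0%nat * f1 sinf * / (dpc sinf * f1 sinf * f2 sinf))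
      with (a2 0%nat * c2 * (1 / (dpc sinf * f2 sinf))) by (field; lra).
    replace (c1 * a1 0%nat * f2 sinf * / (dpc sinf * f1 sinf * f2 sinf))
      with (a1 0%nat * c1 * (1 / (dpc sinf * f1 sinf))) by (field; lra).
    lra. }
  assert (Hc2 : c2 <> 0).
  { intro H0. rewrite H0 in Heq. assert (c1 * a1 0%nat * f2 sinf = 0) by lra.
    assert (c1 = 0).
    { destruct (Req_dec c1 0) as [|Hn]; auto. exfalso.
      apply Rmult_integral in H. destruct H as [H|H]; [|lra].
      apply Rmult_integral in H. destruct H; lra. }
    subst. lra. }
  assert (Hc1 : c1 = c2 * a2 0%nat * f1 sinf / (a1 0%nat * f2 sinf)).
  { rewrite Heq. field. lra. }
  split.
  - rewrite Hc1. replace (c2 * a2 0%nat * f1 sinf / (a1 0%nat * f2 sinf) * c2)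
      with ((c2 * c2) * (a2 0%nat * f1 sinf / (a1 0%nat * f2 sinf))) by (field; lra).
    apply Rmult_gt_0_compat.
    + assert (c2 * c2 > 0); [|lra]. destruct (Rlt_dec 0 c2); nra.
    + apply Rdiv_lt_0_compat; apply Rmult_gt_0_compat; lra.
  - split; auto. rewrite Hc1. field. repeat split; lra.
Qed.
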